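(* Let $G$ be a group of order $n\ge 2$ and let $m\ge 3$ be an odd integer. Let $\Gamma$ be the digraph with vertex set $G\times G\times\mathbb{Z}_m$ in which $(x,y,i)\to(u,v,j)$ if and only if at least one of the following holds: (1) $x=u$, $i=j$ and $y\neq v$; (2) $y=v$, $i=j$ and $x\neq u$; (3) $u=xy$ and $j\in\{i+1,i+2,\dots,i+\tfrac{m-1}{2}\}$ (indices mod $m$); (4) $v=xy$ and $j\in\{i-\tfrac{m-1}{2},\dots,i-2,i-1\}$ (indices mod $m$). Then $\Gamma$ is a directed strongly regular graph with parameters $(v,k,t,\lambda,\mu)=(mn^2,\ mn+n-2,\ 2n+m-3,\ n+m-3,\ m+1)$.
   Context: A digraph here has no loops and no multiple arcs; its adjacency matrix $A$ (rows/columns indexed by the vertices) has $A_{xy}=1$ iff $x\to y$. A directed strongly regular graph with parameters $(v,k,t,\lambda,\mu)$ is a digraph on $v$ vertices whose adjacency matrix $A$ satisfies $A^2=tI+\lambda A+\mu(J-I-A)$ and $AJ=JA=kJ$, where $I$ is the identity and $J$ the all-ones matrix. Products $xy$ are taken in $G$. *)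

(* Defs.v *)
From HB Require Import structures.
From mathcomp Require Import all_boot all_order all_algebra all_fingroup.
Set Implicit Arguments. Unset Strict Implicit. Unset Printing Implicit Defensive.
Import GRing.Theory.

(* Directed strongly regular graphs, stated entrywise on the integer
   adjacency matrix A (indexed by the finite vertex type V):
   A^2 = t I + lambda A + mu (J - I - A),  A J = J A = k J,
   together with the digraph being loopless (no multiple arcs is automatic
   for a relation). *)
Definition adjm (V : finType) (adj : rel V) (x y : V) : int := (adj x y : nat)%:Z.

Definition is_dsrg (V : finType) (adj : rel V) (v k t lam mu : nat) : Prop :=
  [/\ #|V| = v,
      (forall x : V, ~~ adj x x),
      (forall x : V, (\sum_(y : V) adjm adj x y = k%:Z)%R),
      (forall y : V, (\sum_(x : V) adjm adj x y = k%:Z)%R)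
    & (forall x y : V,
        (\sum_(z : V) adjm adj x z * adjm adj z y =
          t%:Z * ((x == y) : nat)%:Z + lam%:Z * adjm adj x y
          + mu%:Z * (1 - ((x == y) : nat)%:Z - adjm adj x y))%R)].

Definition fwd_range (m : nat) (i j : 'I_m) : bool :=
  [exists d : 'I_m, (1 <= d <= (m - 1)./2) && (val j == (i + d) %% m)].
Definition bwd_range (m : nat) (i j : 'I_m) : bool :=
  [exists d : 'I_m, (1 <= d <= (m - 1)./2) && (val j == (i + (m - d)) %% m)].

Definition Gamma_adj (gT : finGroupType) (m : nat) : rel (gT * gT * 'I_m) :=
  fun a b =>
    let: (x, y, i) := a in
    let: (u, v, j) := b in
    [|| [&& x == u, i == j & y != v],
        [&& y == v, i == j & x != u],
        (u == (x * y)%g) && fwd_range i j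
      | (v == (x * y)%g) && bwd_range i j].

(* Main.v *)
Require Import Defs.
From mathcomp Require Import all_boot all_order all_algebra all_fingroup.
From mathcomp Require Import zify.
Set Implicit Arguments. Unset Strict Implicit. Unset Printing Implicit Defensive.

Lemma collapse (T : finType) (c : T) (F : T -> nat) :
  (forall a, a != c -> F a = 0) -> \sum_a F a = F c.
Proof.
move=> H; rewrite (bigD1 c) //= big1 ?addn0 // => a /H //.
Qed.

Lemma eqMl (gT : finGroupType) (u x b : gT) : (u == x * b)%g = (b == x^-1 * u)%g.
Proof. by apply/eqP/eqP => ->; rewrite ?mulKg ?mulKVg. Qed.
Lemma eqMr (gT : finGroupType) (u a y : gT) : (u == a * y)%g = (a == u * y^-1)%g.
Proof. by apply/eqP/eqP => ->; rewrite ?mulgK ?mulgKV. Qed.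

Lemma sumV (gT : finGroupType) (m : nat) (G : gT * gT * 'I_m -> nat) :
  \sum_(z : gT * gT * 'I_m) G z = \sum_(a : gT) \sum_(b : gT) \sum_(k : 'I_m) G ((a, b), k).
Proof.
transitivity (\sum_(p : gT * gT) \sum_(k : 'I_m) G (p, k)).
  by rewrite pair_bigA; apply: eq_bigr => -[p k].
by rewrite [RHS]pair_bigA; apply: eq_bigr => -[a b].
Qed.

Lemma half_eq (m h : nat) (hm : m = h.*2.+1) : (m - 1)./2 = h.
Proof. by rewrite hm subn1 /= doubleK. Qed.

Lemma sumb (T : finType) (P : pred T) : \sum_(i : T) (P i : nat) = #|P|.
Proof. by rewrite -sum1_card [RHS]big_mkcond; apply: eq_bigr => i _; rewrite unfold_in; case: (P i). Qed.

Lemma fwdE (m h : nat) (hm : m = h.*2.+1) (i k : 'I_m) :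
  fwd_range i k = ((i < k <= i + h) || (k + m <= i + h)).
Proof.
rewrite /fwd_range (@half_eq m h hm).
have hi := ltn_ord i; have hk := ltn_ord k.
apply/existsP/idP.
- case=> d /andP[/andP[d1 dh] /eqP ->].
  have hd := ltn_ord d.
  case: (ltnP (i+d) m) => hid.
  + rewrite modn_small //. lia.
  + have -> : (i + d) %% m = i + d - m.
      rewrite -{1}(subnK hid) modnDr modn_small //. lia.
    lia.
- case/orP => H.
  + have hd : k - i < m by lia.
    exists (Ordinal hd) => /=. apply/andP; split; first lia.
    have -> : i + (k - i) = k by lia.
    by rewrite modn_small.
  + have hd : k + m - i < m by lia.
    exists (Ordinal hd) => /=. apply/andP; split; first lia.
    have -> : i + (k + m - i) = k + m by lia.
    by rewrite modnDr modn_small.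
Qed.

Lemma bwdE (m h : nat) (hm : m = h.*2.+1) (i k : 'I_m) :
  bwd_range i k = ((k < i <= k + h) || (i + h < k)).
Proof.
rewrite /bwd_range (@half_eq m h hm).
have hi := ltn_ord i; have hk := ltn_ord k.
apply/existsP/idP.
- case=> d /andP[/andP[d1 dh] /eqP ->].
  have hd := ltn_ord d.
  case: (ltnP (i + (m - d)) m) => hid.
  + rewrite modn_small //. lia.
  + have -> : (i + (m - d)) %% m = i + (m - d) - m.
      rewrite -{1}(subnK hid) modnDr modn_small //. lia.
    lia.
- case/orP => H.
  + have hd : i - k < m by lia.
    exists (Ordinal hd) => /=. apply/andP; split; first lia.
    have -> : i + (m - (i - k)) = k + m by lia.
    by rewrite modnDr modn_small.
  + have hd : i + m - k < m by lia.
    exists (Ordinal hd) => /=. apply/andP; split; first lia.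
    have -> : i + (m - (i + m - k)) = k by lia.
    by rewrite modn_small.
Qed.

Definition R1 (gT : finGroupType) (m : nat) (s z : gT * gT * 'I_m) : bool :=
  [&& s.1.1 == z.1.1, s.2 == z.2 & s.1.2 != z.1.2].
Definition R2 (gT : finGroupType) (m : nat) (s z : gT * gT * 'I_m) : bool :=
  [&& s.1.2 == z.1.2, s.2 == z.2 & s.1.1 != z.1.1].
Definition R3 (gT : finGroupType) (m : nat) (s z : gT * gT * 'I_m) : bool :=
  (z.1.1 == s.1.1 * s.1.2)%g && fwd_range s.2 z.2.
Definition R4 (gT : finGroupType) (m : nat) (s z : gT * gT * 'I_m) : bool :=
  (z.1.2 == s.1.1 * s.1.2)%g && bwd_range s.2 z.2.

Lemma adj_split (gT : finGroupType) (m h : nat) (hm : m = h.*2.+1) (s z : gT * gT * 'I_m) :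
  (Gamma_adj s z : nat) = R1 s z + R2 s z + R3 s z + R4 s z.
Proof.
case: s => [[x y] i]; case: z => [[a b] k].
rewrite /Gamma_adj /R1 /R2 /R3 /R4 /= (fwdE hm) (bwdE hm) -val_eqE /=.
have := ltn_ord i; have := ltn_ord k.
case: (x == a); case: (y == b); case: (a == x * y)%g; case: (b == x * y)%g => /=; lia.
Qed.

Lemma card_range (m h : nat) (hm : m = h.*2.+1) :
  #|[set d : 'I_m | 1 <= d <= h]| = h.
Proof.
rewrite cardsE -sum1_card big_mkcond /=.
rewrite -(big_mkord xpredT (fun d => if 1 <= d <= h then 1 else 0)).
rewrite (@big_cat_nat _ _ _ h.+1) /=; [|lia|lia].
rewrite (@big_cat_nat _ _ _ 1) /=; [|lia|lia].
rewrite (@eq_big_nat _ _ _ 0 1 _ (fun=> 0)); last by move=> d hd; case: ifP => //; lia.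
rewrite (@eq_big_nat _ _ _ 1 h.+1 _ (fun=> 1)); last by move=> d hd; case: ifP => //; lia.
rewrite (@eq_big_nat _ _ _ h.+1 m _ (fun=> 0)); last by move=> d hd; case: ifP => //; lia.
rewrite !sum_nat_const_nat; lia.
Qed.





Lemma count_fwd (m h : nat) (hm : m = h.*2.+1) (i : 'I_m) :
  \sum_(k : 'I_m) (fwd_range i k : nat) = h.
Proof.
have m0 : 0 < m by rewrite hm.
rewrite (@sumb _ (fwd_range i)).
pose g (d : 'I_m) : 'I_m := Ordinal (ltn_pmod (i + d) m0).
have -> : #|fwd_range i| = #|[set k | fwd_range i k]| by rewrite cardsE.
have -> : [set k | fwd_range i k] = g @: [set d : 'I_m | 1 <= d <= h].
  apply/setP => k; rewrite inE /fwd_range (@half_eq m h hm).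
  apply/existsP/imsetP.
  - case=> d /andP[hd /eqP e]; exists d; first by rewrite inE.
    by apply/val_inj.
  - by case=> d; rewrite inE => hd ->; exists d; rewrite hd /=.
rewrite card_imset ?(@card_range m h hm) //.
move=> d1 d2 /(congr1 val) /= /eqP; rewrite eqn_modDl !modn_small // => /eqP e.
exact: val_inj.
Qed.

Lemma count_bwd (m h : nat) (hm : m = h.*2.+1) (i : 'I_m) :
  \sum_(k : 'I_m) (bwd_range i k : nat) = h.
Proof.
have m0 : 0 < m by rewrite hm.
rewrite (@sumb _ (bwd_range i)).
pose g (d : 'I_m) : 'I_m := Ordinal (ltn_pmod (i + (m - d)) m0).
have -> : #|bwd_range i| = #|[set k | bwd_range i k]| by rewrite cardsE.
have -> : [set k | bwd_range i k] = g @: [set d : 'I_m | 1 <= d <= h].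
  apply/setP => k; rewrite inE /bwd_range (@half_eq m h hm).
  apply/existsP/imsetP.
  - case=> d /andP[hd /eqP e]; exists d; first by rewrite inE.
    by apply/val_inj.
  - by case=> d; rewrite inE => hd ->; exists d; rewrite hd /=.
rewrite card_in_imset ?(@card_range m h hm) //.
move=> d1 d2; rewrite !inE => /andP[a1 b1] /andP[a2 b2] /(congr1 val) /= /eqP.
have := ltn_ord d1; have := ltn_ord d2 => o1 o2.
rewrite eqn_modDl !modn_small; try lia.
move=> /eqP e; apply: ord_inj; lia.
Qed.

Ltac killL := let a := fresh "a" in let H := fresh "H" in
  move=> a H; repeat (apply: big1 => ? _);
  rewrite eqMl (negbTE H) /= ?andbF ?andFb ?mul0n ?muln0 //.
Ltac killR := let a := fresh "a" in let H := fresh "H" in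
  move=> a H; repeat (apply: big1 => ? _);
  rewrite eqMr (negbTE H) /= ?andbF ?andFb ?mul0n ?muln0 //.
Ltac kill := let a := fresh "a" in let H := fresh "H" in let H' := fresh "H" in
  move=> a H; have H' := H; rewrite eq_sym in H';
  repeat (apply: big1 => ? _);
  rewrite ?(negbTE H) ?(negbTE H') /= ?andbF ?andFb ?mul0n ?muln0 //.

Lemma cnt1 (T : finType) (n : nat) (hn : #|T| = n) (y : T) : \sum_(b : T) (y != b : nat) = n - 1.
Proof.
rewrite (@sumb _ (fun b => y != b)).
have <- : #|predC1 y| = n - 1 by rewrite cardC1 hn; lia.
by apply: eq_card => b; rewrite !inE eq_sym.
Qed.

Lemma cnt2 (T : finType) (n : nat) (hn : #|T| = n) (hT : 1 < n) (y v : T) :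
  \sum_(b : T) ((y != b : nat) * (b != v)) = n - 2 + (y == v).
Proof.
have e : \sum_(b : T) ((y != b : nat) * (b != v)) + \sum_(b : T) ((y != b : nat) * (b == v))
   = n - 1.
  rewrite -big_split -(cnt1 hn y) /=; apply: eq_bigr => b _.
  by case: (b == v); rewrite /= ?muln0 ?muln1 ?addn0.
have e2 : \sum_(b : T) ((y != b : nat) * (b == v)) = (y != v).
  rewrite (collapse (c:=v)) ?eqxx ?muln1 // => b hb; by rewrite (negbTE hb) muln0.
move: e; rewrite e2; case: (y == v) => /=; lia.
Qed.

Lemma N11 (gT : finGroupType) (m n : nat) (hn : #|gT| = n) (hn2 : 1 < n)
  (x y u v : gT) (i j : 'I_m) :
  \sum_z (R1 ((x, y), i) z : nat) * R1 z ((u, v), j)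
  = ((x == u) && (i == j) : nat) * (n - 2 + (y == v)).
Proof.
rewrite sumV /R1 /R2 /R3 /R4 /=.
rewrite (collapse (c:=x)); last by kill.
rewrite exchange_big (collapse (c:=i)) /=; last by kill.
rewrite !eqxx /=.
case: (x == u); case: (i == j); rewrite /= ?mul1n ?mul0n; first by rewrite (cnt2 hn).
all: by apply: big1 => b _; rewrite ?muln0 ?mul0n.
Qed.

Lemma N12 (gT : finGroupType) (m n : nat) (hn : #|gT| = n) (hn2 : 1 < n)
  (x y u v : gT) (i j : 'I_m) :
  \sum_z (R1 ((x, y), i) z : nat) * R2 z ((u, v), j)
  = [&& y != v, i == j & x != u].
Proof.
rewrite sumV /R1 /R2 /R3 /R4 /=.
rewrite (collapse (c:=x)); last by kill.
rewrite (collapse (c:=v)); last by kill.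
rewrite (collapse (c:=i)); last by kill.
rewrite !eqxx /=.
by case: (x == u); case: (i == j); case: (y == v); case: (u == x * y)%g; case: (v == x * y)%g; case: (fwd_range i j); case: (bwd_range i j).
Qed.

Lemma N21 (gT : finGroupType) (m n : nat) (hn : #|gT| = n) (hn2 : 1 < n)
  (x y u v : gT) (i j : 'I_m) :
  \sum_z (R2 ((x, y), i) z : nat) * R1 z ((u, v), j)
  = [&& y != v, i == j & x != u].
Proof.
rewrite sumV /R1 /R2 /R3 /R4 /=.
rewrite (collapse (c:=u)); last by kill.
rewrite (collapse (c:=y)); last by kill.
rewrite (collapse (c:=i)); last by kill.
rewrite !eqxx /=.
by case: (x == u); case: (i == j); case: (y == v); case: (u == x * y)%g; case: (v == x * y)%g; case: (fwd_range i j); case: (bwd_range i j).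
Qed.

Lemma N22 (gT : finGroupType) (m n : nat) (hn : #|gT| = n) (hn2 : 1 < n)
  (x y u v : gT) (i j : 'I_m) :
  \sum_z (R2 ((x, y), i) z : nat) * R2 z ((u, v), j)
  = ((y == v) && (i == j) : nat) * (n - 2 + (x == u)).
Proof.
rewrite sumV /R1 /R2 /R3 /R4 /=.
rewrite exchange_big (collapse (c:=y)); last by kill.
rewrite exchange_big (collapse (c:=i)) /=; last by kill.
rewrite !eqxx /=.
case: (y == v); case: (i == j); rewrite /= ?mul1n ?mul0n; first by rewrite (cnt2 hn).
all: by apply: big1 => b _; rewrite ?muln0 ?mul0n.
Qed.

Lemma N13 (gT : finGroupType) (m n : nat) (hn : #|gT| = n) (hn2 : 1 < n)
  (x y u v : gT) (i j : 'I_m) :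
  \sum_z (R1 ((x, y), i) z : nat) * R3 z ((u, v), j)
  = (u != x * y)%g && fwd_range i j.
Proof.
rewrite sumV /R1 /R2 /R3 /R4 /=.
rewrite (collapse (c:=x)); last by kill.
rewrite exchange_big (collapse (c:=i)); last by kill.
rewrite !eqxx /=.
rewrite (collapse (c:=(x^-1 * u)%g)); last by killL.
rewrite mulKVg eqxx -eqMl /=.
by case: (x == u); case: (i == j); case: (y == v); case: (u == x * y)%g; case: (v == x * y)%g; case: (fwd_range i j); case: (bwd_range i j).
Qed.

Lemma N14 (gT : finGroupType) (m n : nat) (hn : #|gT| = n) (hn2 : 1 < n)
  (x y u v : gT) (i j : 'I_m) :
  \sum_z (R1 ((x, y), i) z : nat) * R4 z ((u, v), j)
  = (v != x * y)%g && bwd_range i j.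
Proof.
rewrite sumV /R1 /R2 /R3 /R4 /=.
rewrite (collapse (c:=x)); last by kill.
rewrite exchange_big (collapse (c:=i)); last by kill.
rewrite !eqxx /=.
rewrite (collapse (c:=(x^-1 * v)%g)); last by killL.
rewrite mulKVg eqxx -eqMl /=.
by case: (x == u); case: (i == j); case: (y == v); case: (u == x * y)%g; case: (v == x * y)%g; case: (fwd_range i j); case: (bwd_range i j).
Qed.

Lemma N23 (gT : finGroupType) (m n : nat) (hn : #|gT| = n) (hn2 : 1 < n)
  (x y u v : gT) (i j : 'I_m) :
  \sum_z (R2 ((x, y), i) z : nat) * R3 z ((u, v), j)
  = (u != x * y)%g && fwd_range i j.
Proof.
rewrite sumV /R1 /R2 /R3 /R4 /=.
rewrite exchange_big (collapse (c:=y)); last by kill.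
rewrite exchange_big (collapse (c:=i)); last by kill.
rewrite !eqxx /=.
rewrite (collapse (c:=(u * y^-1)%g)); last by killR.
rewrite mulgKV eqxx -eqMr /=.
by case: (x == u); case: (i == j); case: (y == v); case: (u == x * y)%g; case: (v == x * y)%g; case: (fwd_range i j); case: (bwd_range i j).
Qed.

Lemma N24 (gT : finGroupType) (m n : nat) (hn : #|gT| = n) (hn2 : 1 < n)
  (x y u v : gT) (i j : 'I_m) :
  \sum_z (R2 ((x, y), i) z : nat) * R4 z ((u, v), j)
  = (v != x * y)%g && bwd_range i j.
Proof.
rewrite sumV /R1 /R2 /R3 /R4 /=.
rewrite exchange_big (collapse (c:=y)); last by kill.
rewrite exchange_big (collapse (c:=i)); last by kill.
rewrite !eqxx /=.
rewrite (collapse (c:=(v * y^-1)%g)); last by killR.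
rewrite mulgKV eqxx -eqMr /=.
by case: (x == u); case: (i == j); case: (y == v); case: (u == x * y)%g; case: (v == x * y)%g; case: (fwd_range i j); case: (bwd_range i j).
Qed.

Lemma N31 (gT : finGroupType) (m n : nat) (hn : #|gT| = n) (hn2 : 1 < n)
  (x y u v : gT) (i j : 'I_m) :
  \sum_z (R3 ((x, y), i) z : nat) * R1 z ((u, v), j)
  = ((u == x * y)%g && fwd_range i j : nat) * (n - 1).
Proof.
rewrite sumV /R1 /R2 /R3 /R4 /=.
rewrite (collapse (c:=(x * y)%g)); last by kill.
rewrite exchange_big (collapse (c:=j)); last by kill.
rewrite !eqxx /=.
rewrite [u == _]eq_sym.
case: (x * y == u)%g; case: (fwd_range i j); rewrite /= ?mul1n ?mul0n.
  by rewrite -(cnt1 hn v); apply: eq_bigr => b _; rewrite mul1n eq_sym.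
all: by apply: big1 => b _; rewrite ?muln0 ?mul0n.
Qed.

Lemma N32 (gT : finGroupType) (m n : nat) (hn : #|gT| = n) (hn2 : 1 < n)
  (x y u v : gT) (i j : 'I_m) :
  \sum_z (R3 ((x, y), i) z : nat) * R2 z ((u, v), j)
  = (u != x * y)%g && fwd_range i j.
Proof.
rewrite sumV /R1 /R2 /R3 /R4 /=.
rewrite (collapse (c:=(x * y)%g)); last by kill.
rewrite (collapse (c:=v)); last by kill.
rewrite (collapse (c:=j)); last by kill.
rewrite !eqxx /= [(x * y)%g == u]eq_sym.
by case: (x == u); case: (i == j); case: (y == v); case: (u == x * y)%g; case: (v == x * y)%g; case: (fwd_range i j); case: (bwd_range i j).
Qed.

Lemma N41 (gT : finGroupType) (m n : nat) (hn : #|gT| = n) (hn2 : 1 < n)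
  (x y u v : gT) (i j : 'I_m) :
  \sum_z (R4 ((x, y), i) z : nat) * R1 z ((u, v), j)
  = (v != x * y)%g && bwd_range i j.
Proof.
rewrite sumV /R1 /R2 /R3 /R4 /=.
rewrite (collapse (c:=u)); last by kill.
rewrite (collapse (c:=(x * y)%g)); last by kill.
rewrite (collapse (c:=j)); last by kill.
rewrite !eqxx /= [(x * y)%g == v]eq_sym.
by case: (x == u); case: (i == j); case: (y == v); case: (u == x * y)%g; case: (v == x * y)%g; case: (fwd_range i j); case: (bwd_range i j).
Qed.

Lemma N42 (gT : finGroupType) (m n : nat) (hn : #|gT| = n) (hn2 : 1 < n)
  (x y u v : gT) (i j : 'I_m) :
  \sum_z (R4 ((x, y), i) z : nat) * R2 z ((u, v), j)
  = ((v == x * y)%g && bwd_range i j : nat) * (n - 1).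
Proof.
rewrite sumV /R1 /R2 /R3 /R4 /=.
rewrite exchange_big (collapse (c:=(x * y)%g)); last by kill.
rewrite exchange_big (collapse (c:=j)); last by kill.
rewrite !eqxx /=.
rewrite [v == _]eq_sym.
case: (x * y == v)%g; case: (bwd_range i j); rewrite /= ?mul1n ?mul0n.
  by rewrite -(cnt1 hn u); apply: eq_bigr => b _; rewrite mul1n eq_sym.
all: by apply: big1 => b _; rewrite ?muln0 ?mul0n.
Qed.

Lemma N33 (gT : finGroupType) (m n : nat) (hn : #|gT| = n) (hn2 : 1 < n)
  (x y u v : gT) (i j : 'I_m) :
  \sum_z (R3 ((x, y), i) z : nat) * R3 z ((u, v), j)
  = \sum_(k : 'I_m) (fwd_range i k : nat) * fwd_range k j.
Proof.
rewrite sumV /R1 /R2 /R3 /R4 /=.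
rewrite (collapse (c:=(x * y)%g)); last by kill.
rewrite !eqxx /=.
rewrite (collapse (c:=((x * y)^-1 * u)%g)); last by killL.
rewrite mulKVg eqxx /=.
by [].
Qed.

Lemma N34 (gT : finGroupType) (m n : nat) (hn : #|gT| = n) (hn2 : 1 < n)
  (x y u v : gT) (i j : 'I_m) :
  \sum_z (R3 ((x, y), i) z : nat) * R4 z ((u, v), j)
  = \sum_(k : 'I_m) (fwd_range i k : nat) * bwd_range k j.
Proof.
rewrite sumV /R1 /R2 /R3 /R4 /=.
rewrite (collapse (c:=(x * y)%g)); last by kill.
rewrite !eqxx /=.
rewrite (collapse (c:=((x * y)^-1 * v)%g)); last by killL.
rewrite mulKVg eqxx /=.
by [].
Qed.

Lemma N43 (gT : finGroupType) (m n : nat) (hn : #|gT| = n) (hn2 : 1 < n)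
  (x y u v : gT) (i j : 'I_m) :
  \sum_z (R4 ((x, y), i) z : nat) * R3 z ((u, v), j)
  = \sum_(k : 'I_m) (bwd_range i k : nat) * fwd_range k j.
Proof.
rewrite sumV /R1 /R2 /R3 /R4 /=.
rewrite exchange_big (collapse (c:=(x * y)%g)); last by kill.
rewrite !eqxx /=.
rewrite (collapse (c:=(u * (x * y)^-1)%g)); last by killR.
rewrite mulgKV eqxx /=.
by [].
Qed.

Lemma N44 (gT : finGroupType) (m n : nat) (hn : #|gT| = n) (hn2 : 1 < n)
  (x y u v : gT) (i j : 'I_m) :
  \sum_z (R4 ((x, y), i) z : nat) * R4 z ((u, v), j)
  = \sum_(k : 'I_m) (bwd_range i k : nat) * bwd_range k j.
Proof.
rewrite sumV /R1 /R2 /R3 /R4 /=.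
rewrite exchange_big (collapse (c:=(x * y)%g)); last by kill.
rewrite !eqxx /=.
rewrite (collapse (c:=(v * (x * y)^-1)%g)); last by killR.
rewrite mulgKV eqxx /=.
by [].
Qed.


Lemma tri (m h : nat) (hm : m = h.*2.+1) (i k : 'I_m) :
  (fwd_range i k : nat) + bwd_range i k + (i == k) = 1.
Proof.
rewrite (fwdE hm) (bwdE hm) -val_eqE /=.
have := ltn_ord i; have := ltn_ord k; lia.
Qed.

Lemma fwd_sym (m h : nat) (hm : m = h.*2.+1) (i k : 'I_m) :
  fwd_range k i = bwd_range i k.
Proof.
rewrite (fwdE hm) (bwdE hm).
have := ltn_ord i; have := ltn_ord k; lia.
Qed.

Lemma count_fwd_in (m h : nat) (hm : m = h.*2.+1) (j : 'I_m) :
  \sum_(k : 'I_m) (fwd_range k j : nat) = h.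
Proof.
by rewrite -(count_bwd hm j); apply: eq_bigr => k _; rewrite (fwd_sym hm).
Qed.

Lemma count_bwd_in (m h : nat) (hm : m = h.*2.+1) (j : 'I_m) :
  \sum_(k : 'I_m) (bwd_range k j : nat) = h.
Proof.
by rewrite -(count_fwd hm j); apply: eq_bigr => k _; rewrite (fwd_sym hm).
Qed.

Lemma sumF (m h : nat) (hm : m = h.*2.+1) (i j : 'I_m) :
  \sum_(k : 'I_m) (fwd_range i k : nat) * fwd_range k j
  + \sum_(k : 'I_m) (fwd_range i k : nat) * bwd_range k j = h - fwd_range i j.
Proof.
have e : \sum_(k : 'I_m) (fwd_range i k : nat) * fwd_range k j
  + \sum_(k : 'I_m) (fwd_range i k : nat) * bwd_range k j
  + \sum_(k : 'I_m) (fwd_range i k : nat) * (k == j) = h.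
  rewrite -!big_split -(count_fwd hm i) /=; apply: eq_bigr => k _.
  by rewrite -!mulnDr (tri hm) muln1.
have e2 : \sum_(k : 'I_m) (fwd_range i k : nat) * (k == j) = fwd_range i j.
  rewrite (collapse (c:=j)) ?eqxx ?muln1 //.
  by move=> k hk; rewrite (negbTE hk) muln0.
lia.
Qed.

Lemma sumB (m h : nat) (hm : m = h.*2.+1) (i j : 'I_m) :
  \sum_(k : 'I_m) (bwd_range i k : nat) * fwd_range k j
  + \sum_(k : 'I_m) (bwd_range i k : nat) * bwd_range k j = h - bwd_range i j.
Proof.
have e : \sum_(k : 'I_m) (bwd_range i k : nat) * fwd_range k j
  + \sum_(k : 'I_m) (bwd_range i k : nat) * bwd_range k j
  + \sum_(k : 'I_m) (bwd_range i k : nat) * (k == j) = h.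
  rewrite -!big_split -(count_bwd hm i) /=; apply: eq_bigr => k _.
  by rewrite -!mulnDr (tri hm) muln1.
have e2 : \sum_(k : 'I_m) (bwd_range i k : nat) * (k == j) = bwd_range i j.
  rewrite (collapse (c:=j)) ?eqxx ?muln1 //.
  by move=> k hk; rewrite (negbTE hk) muln0.
lia.
Qed.

Lemma out1 (gT : finGroupType) (m n : nat) (hn : #|gT| = n) (x y : gT) (i : 'I_m) :
  \sum_z (R1 ((x, y), i) z : nat) = n - 1.
Proof.
rewrite sumV /R1 /=.
rewrite (collapse (c:=x)); last by kill.
rewrite exchange_big (collapse (c:=i)); last by kill.
by rewrite !eqxx /= (cnt1 hn).
Qed.

Lemma out2 (gT : finGroupType) (m n : nat) (hn : #|gT| = n) (x y : gT) (i : 'I_m) :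
  \sum_z (R2 ((x, y), i) z : nat) = n - 1.
Proof.
rewrite sumV /R2 /=.
rewrite exchange_big (collapse (c:=y)); last by kill.
rewrite exchange_big (collapse (c:=i)); last by kill.
by rewrite !eqxx /= (cnt1 hn).
Qed.

Lemma out3 (gT : finGroupType) (m n h : nat) (hm : m = h.*2.+1) (hn : #|gT| = n) (x y : gT) (i : 'I_m) :
  \sum_z (R3 ((x, y), i) z : nat) = n * h.
Proof.
rewrite sumV /R3 /=.
rewrite (collapse (c:=(x * y)%g)); last by kill.
rewrite eqxx /=.
under eq_bigr do rewrite (count_fwd hm).
by rewrite sum_nat_const hn.
Qed.

Lemma out4 (gT : finGroupType) (m n h : nat) (hm : m = h.*2.+1) (hn : #|gT| = n) (x y : gT) (i : 'I_m) :
  \sum_z (R4 ((x, y), i) z : nat) = n * h.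
Proof.
rewrite sumV /R4 /= exchange_big.
rewrite (collapse (c:=(x * y)%g)); last by kill.
rewrite eqxx /=.
under eq_bigr do rewrite (count_bwd hm).
by rewrite sum_nat_const hn.
Qed.

Lemma in1 (gT : finGroupType) (m n : nat) (hn : #|gT| = n) (u v : gT) (j : 'I_m) :
  \sum_z (R1 z ((u, v), j) : nat) = n - 1.
Proof.
rewrite sumV /R1 /=.
rewrite (collapse (c:=u)); last by kill.
rewrite exchange_big (collapse (c:=j)); last by kill.
rewrite !eqxx /= -(cnt1 hn v); apply: eq_bigr => b _; by rewrite eq_sym.
Qed.

Lemma in2 (gT : finGroupType) (m n : nat) (hn : #|gT| = n) (u v : gT) (j : 'I_m) :
  \sum_z (R2 z ((u, v), j) : nat) = n - 1.
Proof.
rewrite sumV /R2 /=.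
rewrite exchange_big (collapse (c:=v)); last by kill.
rewrite exchange_big (collapse (c:=j)); last by kill.
rewrite !eqxx /= -(cnt1 hn u); apply: eq_bigr => b _; by rewrite eq_sym.
Qed.

Lemma in3 (gT : finGroupType) (m n h : nat) (hm : m = h.*2.+1) (hn : #|gT| = n) (u v : gT) (j : 'I_m) :
  \sum_z (R3 z ((u, v), j) : nat) = n * h.
Proof.
rewrite sumV /R3 /=.
rewrite (eq_bigr (fun a => \sum_k (fwd_range k j : nat))); last first.
  move=> a _; rewrite (collapse (c:=(a^-1 * u)%g)); last by killL.
  by rewrite mulKVg eqxx.
under eq_bigr do rewrite (count_fwd_in hm).
by rewrite sum_nat_const hn.
Qed.

Lemma in4 (gT : finGroupType) (m n h : nat) (hm : m = h.*2.+1) (hn : #|gT| = n) (u v : gT) (j : 'I_m) :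
  \sum_z (R4 z ((u, v), j) : nat) = n * h.
Proof.
rewrite sumV /R4 /=.
rewrite (eq_bigr (fun a => \sum_k (bwd_range k j : nat))); last first.
  move=> a _; rewrite (collapse (c:=(a^-1 * v)%g)); last by killL.
  by rewrite mulKVg eqxx.
under eq_bigr do rewrite (count_bwd_in hm).
by rewrite sum_nat_const hn.
Qed.

Lemma sumz (T : finType) (f : T -> nat) : (\sum_(i : T) Posz (f i))%R = Posz (\sum_(i : T) f i).
Proof. by rewrite (big_morph Posz PoszD (erefl (Posz 0))). Qed.

Lemma square (gT : finGroupType) (m n h : nat) (hm : m = h.*2.+1) (hn : #|gT| = n) (hn2 : 1 < n) (hm3 : 3 <= m)
  (x y u v : gT) (i j : 'I_m) :
  let s := ((x, y), i) in let e := ((u, v), j) in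
  \sum_z ((Gamma_adj s z : nat) * Gamma_adj z e) =
  if s == e then 2 * n + m - 3 else if Gamma_adj s e then n + m - 3 else m + 1.
Proof.
move=> s e.
under eq_bigr do rewrite (adj_split hm s) (adj_split hm _ e) !mulnDl !mulnDr.
rewrite !big_split /=.
rewrite (N11 hn hn2) (N12 hn hn2) (N13 hn hn2) (N14 hn hn2).
rewrite (N21 hn hn2) (N22 hn hn2) (N23 hn hn2) (N24 hn hn2).
rewrite (N31 hn hn2) (N32 hn hn2) (N33 hn hn2) (N34 hn hn2).
rewrite (N41 hn hn2) (N42 hn hn2) (N43 hn hn2) (N44 hn hn2).
have e1 := sumF hm i j; have e2 := sumB hm i j.
have t := tri hm i j.
have := adj_split hm s e.
rewrite /s /e /R1 /R2 /R3 /R4 /= !xpair_eqE.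
move: e1 e2 t.
case: (Gamma_adj (x, y, i) (u, v, j)); case: (x == u); case: (y == v); case: (i == j);
  case: (u == x * y)%g; case: (v == x * y)%g; case: (fwd_range i j); case: (bwd_range i j);
  move=> /=; lia.
Qed.


Lemma irr_adj (gT : finGroupType) (m h : nat) (hm : m = h.*2.+1) (hm3 : 3 <= m) (x y : gT) (i : 'I_m) :
  ~~ Gamma_adj ((x, y), i) ((x, y), i).
Proof.
apply/negP => H.
have := adj_split hm ((x, y), i) ((x, y), i).
rewrite H /R1 /R2 /R3 /R4 /= !eqxx /= (fwdE hm) (bwdE hm) ltnn /=.
have := ltn_ord i; case: (x == x * y)%g; case: (y == x * y)%g => /=; lia.
Qed.

Unset Implicit Arguments.
Theorem mainTheorem1 (gT : finGroupType) (n m : nat)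
  (hn : #|gT| = n) (hn2 : 2 <= n) (hm3 : 3 <= m) (hmodd : odd m) :
  is_dsrg (@Gamma_adj gT m) (m * n ^ 2) (m * n + n - 2) (2 * n + m - 3)
    (n + m - 3) (m + 1).
Proof.
set h := m./2.
have hm : m = h.*2.+1.
  by rewrite -{1}(odd_double_half m) hmodd add1n.
split.
- rewrite !card_prod card_ord hn; lia.
- case=> [[x y] i]; apply/negP => H.
  have := adj_split hm ((x, y), i) ((x, y), i).
  rewrite H /R1 /R2 /R3 /R4 /= !eqxx /= (fwdE hm) (bwdE hm) ltnn /=.
  have := ltn_ord i; case: (x == x * y)%g; case: (y == x * y)%g => /=; lia.
- case=> [[x y] i]; rewrite /adjm sumz; congr Posz.
  under eq_bigr do rewrite (adj_split hm).
  rewrite !big_split /= (out1 hn) (out2 hn) (out3 hm hn) (out4 hm hn).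
  rewrite hm; nia.
- case=> [[u v] j]; rewrite /adjm sumz; congr Posz.
  under eq_bigr do rewrite (adj_split hm _ ((u, v), j)).
  rewrite !big_split /= (in1 hn) (in2 hn) (in3 hm hn) (in4 hm hn).
  rewrite hm; nia.
- case=> [[x y] i]; case=> [[u v] j]; rewrite /adjm.
  under eq_bigr do rewrite -PoszM.
  rewrite sumz (square hm hn hn2 hm3).
  have irr := irr_adj hm hm3 x y i.
  case: eqP => [<-|_]; first by rewrite (negbTE irr) /=; lia.
  case: (Gamma_adj _ _) => /=; lia.
Qed.
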